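(* Let $\mathbf{x},\mathbf{v}$ be random variables, $\mathrm{t}\in\{0,1\}$ a treatment and $\mathbf{y}(t)$ the potential outcomes. Suppose $\mathbf{x}$ is a balancing covariate of $\mathbf{v}$, i.e. $\mathrm{t}\perp\mathbf{v}\mid\mathbf{x}$. If $\mathbf{v}$ satisfies exchangeability ($\mathbf{y}(t)\perp\mathrm{t}\mid\mathbf{v}$) and $\mathbf{y}(t)\perp\mathbf{x}\mid\mathbf{v},\mathrm{t}$, then $\mathbf{x}$ satisfies exchangeability, i.e. $\mathbf{y}(t)\perp\mathrm{t}\mid\mathbf{x}$.
   Context: Potential outcomes framework with binary treatment $\mathrm{t}$ and potential outcomes $\mathbf{y}(0),\mathbf{y}(1)$; statements involving $t$ without quantification are meant for both $t\in\{0,1\}$. *)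

(* Defs.v *)
From HB Require Import structures.
From mathcomp Require Import all_boot all_order all_algebra.
From mathcomp Require Import all_classical all_reals all_analysis.
Set Implicit Arguments. Unset Strict Implicit. Unset Printing Implicit Defensive.
Import Order.TTheory GRing.Theory Num.Theory.
Local Open Scope classical_set_scope.
Local Open Scope ring_scope.

(* Conditional independence  X _||_ Y | Z  on a probability space (T, P):
   for every measurable event A of X there is a version g(Z) of the
   conditional probability P(X \in A | Z), i.e. a measurable g with values
   in [0,1], which is also a version of P(X \in A | Y, Z); the latter is
   expressed by the defining property of conditional probability on the
   generating pi-system {Y \in B, Z \in C} of sigma(Y, Z):
     P(X \in A, Y \in B, Z \in C) = \int_{Y \in B, Z \in C} g(Z) dP. *)
Definition cond_indep (R : realType) (d : measure_display) (T : measurableType d)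
    (P : probability T R)
    (dX dY dZ : measure_display) (TX : measurableType dX)
    (TY : measurableType dY) (TZ : measurableType dZ)
    (X : T -> TX) (Y : T -> TY) (Z : T -> TZ) : Prop :=
  forall A : set TX, measurable A ->
    exists g : TZ -> R,
      [/\ measurable_fun setT g,
          (forall z, 0 <= g z <= 1) &
          forall (B : set TY) (C : set TZ), measurable B -> measurable C ->
            P (X @^-1` A `&` Y @^-1` B `&` Z @^-1` C) =
            (\int[P]_(w in Y @^-1` B `&` Z @^-1` C) (g (Z w))%:E)%E].

(* Main.v *)
Require Import Defs.
From HB Require Import structures.
From mathcomp Require Import all_boot all_order all_algebra.
From mathcomp Require Import all_classical all_reals all_analysis.
From mathcomp Require Import measurable_realfun ring.

Module Helpers.
Set Implicit Arguments. Unset Strict Implicit. Unset Printing Implicit Defensive.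
Import Order.TTheory GRing.Theory Num.Theory.
Import numFieldNormedType.Exports.
Import HBNNSimple.
Local Open Scope classical_set_scope.
Local Open Scope ring_scope.

Section L.
Local Open Scope ereal_scope.
Context (R : realType) d (T : measurableType d) (P : {measure set T -> \bar R}).
Context dz (TZ : measurableType dz) (Z : T -> TZ) (mZ : measurable_fun setT Z).
Variables (a b : T -> R) (ma : measurable_fun setT a) (mb : measurable_fun setT b).
Hypotheses (a0 : forall w, (0 <= a w)%R) (b0 : forall w, (0 <= b w)%R).
Hypothesis H : forall C, measurable C ->
  \int[P]_w (a w * \1_(Z @^-1` C) w)%:E = \int[P]_w (b w * \1_(Z @^-1` C) w)%:E.

Let ind C w : \1_(Z @^-1` C) w = \1_C (Z w) :> R.
Proof. by []. Qed.

Let simple_step (h : {nnsfun TZ >-> R}) (c : T -> R) (mc : measurable_fun setT c)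
  (c0 : forall w, (0 <= c w)%R) :
  \int[P]_w (h (Z w) * c w)%:E =
  \sum_(r \in range h) (r%:E * \int[P]_w (c w * \1_(Z @^-1` (h @^-1` [set r])) w)%:E).
Proof.
transitivity (\int[P]_w (\sum_(r \in range h)
    (r%:E * (\1_(h @^-1` [set r]) (Z w))%:E * (c w)%:E))).
  apply: eq_integral => w _; rewrite fimfunE.
  rewrite fsbig_finite//= fsbig_finite//= big_distrl/= -sumEFin.
  by apply: eq_bigr => r _; rewrite -!EFinM.
rewrite ge0_integral_fsum//; last 2 first.
- move=> r; apply: emeasurable_funM; last exact/measurable_EFinP.
  apply: emeasurable_funM => //; apply/measurable_EFinP.
  apply: measurableT_comp => //; apply: measurable_indic.
- by move=> r w _; rewrite mule_ge0 ?nnfun_muleindic_ge0 ?lee_fin.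
apply: eq_fsbigr => r; rewrite inE => -[z _ <-].
under eq_integral do rewrite -muleA.
rewrite ge0_integralZl//.
- by congr (_ * _); apply: eq_integral => w _; rewrite -EFinM mulrC.
- apply: emeasurable_funM; last exact/measurable_EFinP.
  apply/measurable_EFinP.
  apply: measurableT_comp => //; apply: measurable_indic; exact: measurable_sfunP.
- by move=> w _; rewrite mule_ge0// lee_fin.
- by rewrite lee_fin.
Qed.

Lemma L_main (phi : TZ -> R) (mphi : measurable_fun setT phi)
  (phi0 : forall z, (0 <= phi z)%R) :
  \int[P]_w (phi (Z w) * a w)%:E = \int[P]_w (phi (Z w) * b w)%:E.
Proof.
have mphiE : measurable_fun setT (EFin \o phi) by exact/measurable_EFinP.
pose h := nnsfun_approx measurableT mphiE.
have phiE0 : forall z, setT z -> 0 <= (EFin \o phi) z by move=> z _; rewrite lee_fin.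
have conv (c : T -> R) (mc : measurable_fun setT c) (c0 : forall w, (0 <= c w)%R) :
    \int[P]_w (phi (Z w) * c w)%:E =
    limn (fun n => \int[P]_w (h n (Z w) * c w)%:E).
  rewrite -monotone_convergence//.
  - apply: eq_integral => w _; apply/esym/cvg_lim => //.
    rewrite EFinM; under eq_fun do rewrite EFinM.
    apply: cvgeZr => //.
    have := @cvg_nnsfun_approx _ _ _ setT measurableT _ mphiE phiE0 (Z w) I.
    by [].
  - move=> n; apply/measurable_EFinP; apply: measurable_funM => //.
    by apply: measurableT_comp => //; exact: measurable_funP.
  - by move=> n w _; rewrite lee_fin mulr_ge0.
  - move=> w _ m n mn; rewrite lee_fin ler_wpM2r//.
    exact/lefP/nd_nnsfun_approx.
rewrite (conv a)// (conv b)//; congr (limn _); apply/funext => n.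
rewrite !simple_step//; apply: eq_fsbigr => r _; congr (_ * _).
apply: H; exact: measurable_sfunP.
Qed.
End L.
Lemma int_ind (R : realType) d (T : measurableType d) (P : {measure set T -> \bar R}) (S : set T) (F : T -> R) :
  (\int[P]_(w in S) (F w)%:E = \int[P]_w (F w * \1_S w)%:E)%E.
Proof.
rewrite integral_mkcond epatch_indic; apply: eq_integral => w _.
by rewrite /= EFinM.
Qed.

Section nuF.
Local Open Scope ereal_scope.
Context (R : realType) d (T : measurableType d) (P : probability T R).
Context dX (X : measurableType dX) (x : {mfun T >-> X}) (F : {mfun T >-> R}).

Definition Fc w : R := (Num.min `|F w| 1)%R.

Lemma Fc_ge0 w : (0 <= Fc w)%R.
Proof. by rewrite /Fc le_min normr_ge0 ler01. Qed.

Lemma Fc_le1 w : (Fc w <= 1)%R.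
Proof. by rewrite /Fc ge_min lexx orbT. Qed.

Lemma mFc : measurable_fun setT Fc.
Proof.
apply: measurable_minr => //; apply: measurableT_comp => //.
Qed.

Definition nuF (C : set X) : \bar R := \int[P]_(w in x @^-1` C) (Fc w)%:E.

Let nuF0 : nuF set0 = 0.
Proof. by rewrite /nuF preimage_set0 integral_set0. Qed.

Let nuF_ge0 C : 0 <= nuF C.
Proof. by apply: integral_ge0 => w _; rewrite lee_fin Fc_ge0. Qed.

Let nuF_sigma : semi_sigma_additive nuF.
Proof.
move=> G mG tG mUG; rewrite /nuF preimage_bigcup.
apply: (@semi_sigma_additive_nng_induced _ _ _ P (fun w => (Fc w)%:E)).
- exact/measurable_EFinP/mFc.
- by move=> w; rewrite lee_fin Fc_ge0.
- by move=> n; rewrite -[X in measurable X]setTI; exact: measurable_funP.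
- apply/trivIsetP => /= i j _ _ ij; rewrite -preimage_setI.
  by move/trivIsetP : tG => /(_ _ _ _ _ ij) ->//; rewrite preimage_set0.
- by rewrite -preimage_bigcup -[X in measurable X]setTI; exact: measurable_funP.
Qed.

HB.instance Definition _ := isMeasure.Build _ _ _ nuF nuF0 nuF_ge0 nuF_sigma.

Lemma nuF_le C : measurable C -> nuF C <= distribution P x C.
Proof.
move=> mC; rewrite /nuF /distribution /pushforward.
have mxC : measurable (x @^-1` C).
  by rewrite -[X in measurable X]setTI; exact: measurable_funP.
rewrite -[X in _ <= X]mul1e -integral_cst//.
apply: ge0_le_integral => //.
- by move=> w _; rewrite lee_fin Fc_ge0.
- exact/measurable_funTS/measurable_EFinP/mFc.
- by move=> w _; rewrite lee_fin Fc_le1.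
Qed.

Let nuF_fin : fin_num_fun nuF.
Proof.
move=> C mC; rewrite ge0_fin_numE//.
apply: (le_lt_trans (nuF_le mC)).
apply: (le_lt_trans (probability_le1 _ _)) => //.
exact: ltry.
Qed.

HB.instance Definition _ := Measure_isFinite.Build _ _ _ nuF nuF_fin.

End nuF.

Lemma CE (R : realType) d (T : measurableType d) (P : probability T R)
  dX (X : measurableType dX) (x : T -> X) (mx : measurable_fun setT x)
  (F : T -> R) (mF : measurable_fun setT F) (F01 : forall w, (0 <= F w <= 1)%R) :
  exists g : X -> R, [/\ measurable_fun setT g, (forall z, (0 <= g z <= 1)%R) &
    forall C, measurable C ->
      (\int[P]_w (F w * \1_(x @^-1` C) w)%:E = \int[P]_w (g (x w) * \1_(x @^-1` C) w)%:E)%E].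
Proof.
pose xm : {mfun T >-> X} := HB.pack x (isMeasurableFun.Build _ _ _ _ x mx).
pose Fm : {mfun T >-> R} := HB.pack F (isMeasurableFun.Build _ _ _ _ F mF).
have FcE w : Fc Fm w = F w.
  have /andP[F0 F1] := F01 w.
  by rewrite /Fc /= ger0_norm// min_l.
pose mu := distribution P xm.
pose nu := nuF P xm Fm.
have dom : nu `<< mu.
  apply/null_content_dominatesP => A mA muA.
  apply/eqP; rewrite eq_le measure_ge0 andbT -muA.
  exact: nuF_le.
have [G [G0 intG nuG]] := radon_nikodym_finite dom.
have mG : measurable_fun setT G := measurable_int _ intG.
have {}nuG E : measurable E -> nu E = (\int[mu]_(z in E) G z)%E := nuG E.
pose g z := fine (mine (G z) 1%:E).
have gE z : (g z)%:E = mine (G z) 1%:E.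
  rewrite fineK// ge0_fin_numE; last by rewrite le_min G0 lee01.
  by apply: (le_lt_trans _ (ltry 1)); rewrite ge_min lexx orbT.
have mg : measurable_fun setT g.
  apply: measurableT_comp; first exact: fine_measurable.
  exact: measurable_mine.
have g01 z : (0 <= g z <= 1)%R.
  by rewrite -!lee_fin gE le_min G0 lee01 ge_min lexx orbT.
exists g; split => // C mC.
have mxC : measurable (x @^-1` C).
  have := mx measurableT _ mC; rewrite setTI. exact.
rewrite -(int_ind P (x @^-1` C) F) -(int_ind P (x @^-1` C) (g \o x)).
transitivity (nu C).
  by apply: eq_integral => w _; rewrite FcE.
have -> : (\int[P]_(w in x @^-1` C) ((g \o x) w)%:E = \int[mu]_(z in C) (g z)%:E)%E.
  rewrite /mu /distribution (ge0_integral_pushforward mx P (f := fun z => (g z)%:E) mC)//.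
  - exact/measurable_funTS/measurable_EFinP.
  - by move=> z _; rewrite lee_fin; case/andP: (g01 z).
pose S := [set z | (1%:E < G z)%E].
have mS : measurable S.
  by rewrite -[S]setTI; apply: measurable_lte => //.
have mCS : measurable (C `&` S) by exact: measurableI.
have mCnS : measurable (C `&` ~` S) by apply: measurableI => //; exact: measurableC.
have CE : C = (C `&` ~` S) `|` (C `&` S).
  by rewrite -setIUr setUC setUCr setIT.
have dCS : [disjoint C `&` ~` S & C `&` S].
  by apply/disj_setPS => z [[_ nS] [_ zS]]; exact: nS zS.
have nuS : nu (C `&` S) = mu (C `&` S).
  apply/eqP; rewrite eq_le nuF_le//= nuG//.
  rewrite -[X in (X <= _)%E]mul1e -integral_cst//.
  apply: ge0_le_integral => //.
  - exact: measurable_funTS.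
  - by move=> z [_ /ltW].
have nuU : nu ((C `&` ~` S) `|` (C `&` S)) = (nu (C `&` ~` S) + nu (C `&` S))%E.
  apply: (measureU (nuF P xm Fm) mCnS mCS).
  by rewrite setIACA setICl setI0.
rewrite [in LHS]CE [in RHS]CE nuU ge0_integral_setU//; first last.
- by move=> z _; rewrite lee_fin; case/andP: (g01 z).
- by rewrite -CE; exact/measurable_funTS/measurable_EFinP.
congr (_ + _)%E.
  rewrite nuG//; apply: eq_integral => z; rewrite inE => -[_ /negP].
  by rewrite -leNgt gE => zS; rewrite min_l.
rewrite nuS -[LHS]mul1e -integral_cst//; apply: eq_integral => z.
by rewrite inE => -[_ zS]; rewrite gE min_r// ltW.
Qed.
Lemma ae_step (R : realType) d (T : measurableType d) (P : probability T R)
  dz (TZ : measurableType dz) (Z : T -> TZ) (mZ : measurable_fun setT Z)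
  (k1 k2 : TZ -> R) (mk1 : measurable_fun setT k1) (mk2 : measurable_fun setT k2)
  (k1b : forall z, (0 <= k1 z <= 1)%R) (k2b : forall z, (0 <= k2 z <= 1)%R)
  (H : forall E, measurable E ->
     (\int[P]_(w in Z @^-1` E) (k1 (Z w))%:E = \int[P]_(w in Z @^-1` E) (k2 (Z w))%:E)%E)
  (D : set T) (mD : measurable D) :
  (\int[P]_(w in D) (k1 (Z w))%:E = \int[P]_(w in D) (k2 (Z w))%:E)%E.
Proof.
pose Zm : {mfun T >-> TZ} := HB.pack Z (isMeasurableFun.Build _ _ _ _ Z mZ).
pose mu := distribution P Zm.
have mZE E : measurable E -> measurable (Z @^-1` E).
  by move=> mE; have := mZ measurableT _ mE; rewrite setTI.
have mk1E : measurable_fun setT (EFin \o k1) by exact/measurable_EFinP.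
have mk2E : measurable_fun setT (EFin \o k2) by exact/measurable_EFinP.
have H' E : E `<=` setT -> measurable E ->
    (\int[mu]_(z in E) (EFin \o k1) z = \int[mu]_(z in E) (EFin \o k2) z)%E.
  move=> _ mE; rewrite /mu /distribution.
  rewrite (ge0_integral_pushforward mZ P (f := EFin \o k1) mE)//; last 2 first.
  - exact: measurable_funTS.
  - by move=> z _; rewrite lee_fin; case/andP: (k1b z).
  rewrite (ge0_integral_pushforward mZ P (f := EFin \o k2) mE)//; last 2 first.
  - exact: measurable_funTS.
  - by move=> z _; rewrite lee_fin; case/andP: (k2b z).
  exact: H.
have int1 : mu.-integrable setT (EFin \o k1).
  apply/integrableP; split => //.
  apply: (le_lt_trans _ (ltry 1)).
  have <- : (\int[mu]_z (cst 1%:E) z = 1%:E)%E.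
    have mu1 : mu setT = 1%:E by exact: probability_setT.
    by rewrite integral_cst// mul1e; exact: mu1.
  apply: ge0_le_integral => //.
  - apply: measurableT_comp => //.
  - by move=> z _ /=; rewrite lee_fin ger0_norm; case/andP: (k1b z).
have [N [mN N0 sub]] := integral_ae_eq measurableT int1 mk2E H'.
apply: ae_eq_integral => //.
- exact/measurable_funTS/measurable_EFinP/measurableT_comp.
- exact/measurable_funTS/measurable_EFinP/measurableT_comp.
exists (Z @^-1` N); split.
- exact: mZE.
- by have := N0; rewrite /mu /distribution /pushforward.
- move=> w /= nw; apply: sub => /= Hz; apply: nw => _.
  by have := Hz I.
Qed.

Lemma ind_ge0 T (R : realType) (A : set T) w : (0 <= \1_A w :> R)%R.
Proof. by rewrite indicE; case: (w \in A). Qed.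

Lemma ind_le1 T (R : realType) (A : set T) w : (\1_A w <= 1 :> R)%R.
Proof. by rewrite indicE; case: (w \in A). Qed.

Lemma mpre d (T : measurableType d) d' (U : measurableType d') (f : T -> U)
  (mf : measurable_fun setT f) (A : set U) : measurable A -> measurable (f @^-1` A).
Proof. by move=> mA; have := mf measurableT _ mA; rewrite setTI. Qed.

End Helpers.
Unset Implicit Arguments. Set Strict Implicit. Set Printing Implicit Defensive.
Import Helpers.
Import Order.TTheory GRing.Theory Num.Theory.
Local Open Scope classical_set_scope.
Local Open Scope ring_scope.

Theorem proposition7 (R : realType) (d : measure_display) (Omega : measurableType d)
    (P : probability Omega R)
    (dx dv dy : measure_display) (X : measurableType dx) (V : measurableType dv)
    (Y : measurableType dy)
    (x : Omega -> X) (v : Omega -> V) (t : Omega -> bool) (y : bool -> Omega -> Y)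
    (mx : measurable_fun setT x) (mv : measurable_fun setT v)
    (mt : measurable_fun setT t) (my : forall s, measurable_fun setT (y s)) :
  (* x is a balancing covariate of v:  t _||_ v | x *)
  cond_indep P t v x ->
  (* exchangeability of v:  y(s) _||_ t | v  for both s *)
  (forall s : bool, cond_indep P (y s) t v) ->
  (* y(s) _||_ x | (v, t)  for both s *)
  (forall s : bool, cond_indep P (y s) x (fun w => (v w, t w))) ->
  (* conclusion: exchangeability of x:  y(s) _||_ t | x  for both s *)
  forall s : bool, cond_indep P (y s) t x.
Proof.
move=> H1 H2 H3 s A mA.
have mEy : measurable (y s @^-1` A) by exact: mpre.
have [f [mf f01 Hf]] := H2 s A mA.
have [k [mk k01 Hk]] := H3 s A mA.
have [g [mg g01 Hg]] := CE P mx (measurableT_comp mf mv) (fun w => f01 (v w)).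
exists g; split => // B C mB mC.
have [h [mh h01 Hh]] := H1 B mB.
pose Zvt := fun w => (v w, t w).
have mZ : measurable_fun setT Zvt := measurable_fun_pair mv mt.
have mtB : measurable (t @^-1` B) by exact: mpre.
have mxC : measurable (x @^-1` C) by exact: mpre.
have mTB : measurable (setT `*` B : set (V * bool)) by exact: measurableX.
have -> : y s @^-1` A `&` t @^-1` B `&` x @^-1` C =
    y s @^-1` A `&` x @^-1` C `&` Zvt @^-1` (setT `*` B).
  apply/seteqP; split => w /=.
  - by move=> [[Ay Bt] Cx].
  - by move=> [[Ay Cx] [_ Bt]].
rewrite Hk //.
have Hb E : measurable E ->
    (\int[P]_(w in Zvt @^-1` E) (k (Zvt w))%:E =
     \int[P]_(w in Zvt @^-1` E) (f (Zvt w).1)%:E)%E.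
  move=> mE; have := Hk setT E measurableT mE.
  rewrite preimage_setT setIT setTI => <-.
  pose U b := t @^-1` [set b] `&` v @^-1` (ysection E b).
  have mU b : measurable (U b).
    apply: measurableI; first exact: mpre.
    by apply: mpre => //; exact: measurable_ysection.
  have ZE : Zvt @^-1` E = U false `|` U true.
    apply/seteqP; split => w /=; rewrite /U /ysection /=.
    - move=> Ew; case tw: (t w); [right|left]; split => //=;
        by rewrite in_setE -tw.
    - by move=> [[/= tw Ew]|[/= tw Ew]]; move: Ew; rewrite in_setE /Zvt /= tw.
  have U0 : U false `&` U true = set0.
    apply/seteqP; split => [w [[/= tw0 _] [/= tw1 _]]|//]; by rewrite tw0 in tw1.
  rewrite ZE setIUr measureU//; first last.
  - by rewrite setIACA U0 setI0.
  - exact: measurableI.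
  - exact: measurableI.
  rewrite ge0_integral_setU//; first last.
  - by rewrite /disj_set U0.
  - by move=> w _; rewrite lee_fin; case/andP: (f01 (v w)).
  - apply/measurable_funTS/measurable_EFinP; exact: measurableT_comp mf mv.
  by rewrite !setIA; congr (_ + _)%E; apply: Hf => //; exact: measurable_ysection.
rewrite (@ae_step _ _ _ P _ _ Zvt mZ k (fun z => f z.1) mk
  (measurableT_comp mf measurable_fst) k01 (fun z => f01 z.1) Hb); last first.
  by apply: measurableI => //; exact: mpre.
rewrite int_ind [RHS]int_ind.
have ixC w : \1_C (x w) = \1_(x @^-1` C) w :> R by [].
have f0 w : (0 <= f w)%R by case/andP: (f01 w).
have h0 w : (0 <= h w)%R by case/andP: (h01 w).
have g0 w : (0 <= g w)%R by case/andP: (g01 w).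
have mIC : measurable_fun setT (\1_C : X -> R) by exact: measurable_indic.
have mIxC : measurable_fun setT (\1_(x @^-1` C) : Omega -> R) by exact: measurable_indic.
transitivity (\int[P]_w (f (v w) * (h (x w) * \1_(x @^-1` C) w))%:E)%E.
  have -> : x @^-1` C `&` Zvt @^-1` (setT `*` B) = t @^-1` B `&` x @^-1` C.
    apply/seteqP; split => w /=; first by move=> [Cx [_ Bt]].
    by move=> [Bt Cx]; split.
  apply: (L_main mv (a := \1_(t @^-1` B `&` x @^-1` C))
     (b := fun w => h (x w) * \1_(x @^-1` C) w)) => //.
  - by apply: measurable_indic; exact: measurableI.
  - by apply: measurable_funM => //; exact: measurableT_comp.
  - by move=> w; rewrite mulr_ge0// ind_ge0.
  - move=> D mD.
    have mvD : measurable (v @^-1` D) by exact: mpre.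
    transitivity (P (t @^-1` B `&` v @^-1` D `&` x @^-1` C)).
      rewrite -[in RHS](setIT (t @^-1` B `&` v @^-1` D `&` x @^-1` C)).
      rewrite -integral_indic//; last first.
        by apply: measurableI => //; exact: measurableI.
      apply: eq_integral => w _; congr (_%:E).
      by rewrite !indicI /=; ring.
    rewrite Hh// int_ind; apply: eq_integral => w _; congr (_%:E).
    by rewrite !indicI /=; ring.
transitivity (\int[P]_w ((h (x w) * \1_C (x w)) * f (v w))%:E)%E.
  by apply: eq_integral => w _; congr (_%:E); rewrite ixC; ring.
transitivity (\int[P]_w ((h (x w) * \1_C (x w)) * g (x w))%:E)%E.
  apply: (L_main mx (a := f \o v) (b := g \o x) _ _ _ _ Hg
     (phi := fun z => h z * \1_C z)) => //.
  - exact: measurableT_comp.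
  - exact: measurableT_comp.
  - by move=> w; exact: f0.
  - by move=> w; exact: g0.
  - by apply: measurable_funM.
  - by move=> z; rewrite mulr_ge0// ind_ge0.
transitivity (\int[P]_w ((g (x w) * \1_C (x w)) * h (x w))%:E)%E.
  by apply: eq_integral => w _; congr (_%:E); ring.
transitivity (\int[P]_w ((g (x w) * \1_C (x w)) * \1_(t @^-1` B) w)%:E)%E.
  symmetry; apply: (L_main mx (a := \1_(t @^-1` B)) (b := h \o x) _ _ _ _ _
     (phi := fun z => g z * \1_C z)) => //.
  - exact: measurableT_comp.
  - by move=> w; exact: h0.
  - move=> C' mC'.
    have mxC' : measurable (x @^-1` C') by exact: mpre.
    transitivity (P (t @^-1` B `&` v @^-1` setT `&` x @^-1` C')).
      rewrite preimage_setT setIT -[in RHS](setIT (t @^-1` B `&` x @^-1` C')).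
      rewrite -integral_indic//; last first.
        exact: measurableI.
      apply: eq_integral => w _; congr (_%:E).
      by rewrite !indicI.
    by rewrite Hh// preimage_setT setTI int_ind.
  - by apply: measurable_funM.
  - by move=> z; rewrite mulr_ge0// ind_ge0.
by apply: eq_integral => w _; congr (_%:E); rewrite indicI /= ixC; ring.
Qed.
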